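(* Let $A$ be a two-dimensional evolution algebra over a field $\mathbb{K}$ with $A^2=A$. Then: (i) if $\mathfrak{S}(A)=\mathfrak{D}_1$, there is a natural basis with structure matrix $\begin{pmatrix}1&0\\0&1\end{pmatrix}$ (the algebra $A_1$); (ii) if $\mathfrak{S}(A)=\mathfrak{D}_2$, there is a natural basis with structure matrix $\begin{pmatrix}0&\alpha\\1&0\end{pmatrix}$ for some $\alpha\in\mathbb{K}^\times$ (the algebra $A_{2,\alpha}$); (iii) if $\mathfrak{S}(A)=\mathfrak{D}_3$, there is a natural basis with structure matrix $\begin{pmatrix}1&\alpha\\0&1\end{pmatrix}$ for some $\alpha\in\mathbb{K}^\times$ (the algebra $A_{3,\alpha}$); (iv) if $\mathfrak{S}(A)=\mathfrak{D}_4$, there is a natural basis with structure matrix $\begin{pmatrix}0&1\\\alpha&1\end{pmatrix}$ for some $\alpha\in\mathbb{K}^\times$ (the algebra $A_{4,\alpha}$); (v) if $\mathfrak{S}(A)=\mathfrak{D}_5$, there is a natural basis with structure matrix $\begin{pmatrix}1&\alpha\\\beta&1\end{pmatrix}$ for some $\alpha,\beta\in\mathbb{K}^\times$ with $\alpha\beta\neq1$ (the algebra $A_{5,\alpha,\beta}$).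
   Context: An evolution algebra over $\mathbb{K}$ is a $\mathbb{K}$-algebra with a basis $\{e_i\}$ (natural basis) such that $e_ie_j=0$ for $i\neq j$. For a natural basis $B=\{e_1,e_2\}$ the structure matrix is $M_B=(\omega_{ij})$ where $e_j^2=\omega_{1j}e_1+\omega_{2j}e_2$. The pseudo-square relative to $B$ is $E_B\subseteq\{L,T,R,D\}$ with $L\in E_B$ iff $\omega_{11}\neq0$, $T\in E_B$ iff $\omega_{12}\neq0$, $R\in E_B$ iff $\omega_{22}\neq0$, $D\in E_B$ iff $\omega_{21}\neq0$; the square $\mathfrak{S}(A)$ is the set of all $E_B$ over all natural bases $B$. $\mathfrak{D}_1=\{\{L,R\}\}$, $\mathfrak{D}_2=\{\{T,D\}\}$, $\mathfrak{D}_3=\{\{L,T,R\},\{L,R,D\}\}$, $\mathfrak{D}_4=\{\{L,T,D\},\{T,R,D\}\}$, $\mathfrak{D}_5=\{\{L,T,R,D\}\}$. *)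

(* Defs.v *)
From HB Require Import structures.
From mathcomp Require Import all_boot all_order all_algebra.
Set Implicit Arguments.
Unset Strict Implicit.
Unset Printing Implicit Defensive.
Import GRing.Theory.
Local Open Scope ring_scope.

(* Letters for pseudo-squares: L (w11), T (w12), R (w22), D (w21). *)
Inductive letter := L | T | R | D.

Definition letter_code (x : letter) : 'I_4 :=
  match x with L => inord 0 | T => inord 1 | R => inord 2 | D => inord 3 end.
Definition letter_decode (i : 'I_4) : letter :=
  match val i with 0%N => L | 1%N => T | 2%N => R | _ => D end.
Lemma letter_codeK : cancel letter_code letter_decode.
Proof. by case; rewrite /letter_decode /= inordK. Qed.
HB.instance Definition _ := Finite.copy letter (can_type letter_codeK).

Section EvolutionAlgebras.
Variables (K : fieldType) (V : vectType K) (mul : V -> V -> V).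

Definition bilinear_mul : Prop :=
  (forall (a : K) (x y z : V), mul (a *: x + y) z = a *: mul x z + mul y z) /\
  (forall (a : K) (x y z : V), mul z (a *: x + y) = a *: mul z x + mul z y).

Definition natural_basis (e1 e2 : V) : Prop :=
  basis_of fullv [:: e1; e2] /\ mul e1 e2 = 0 /\ mul e2 e1 = 0.

Definition evolution_algebra : Prop := exists e1 e2, natural_basis e1 e2.

Definition square_full : Prop :=
  forall z : V, exists s : seq (V * V), z = \sum_(p <- s) mul p.1 p.2.

(* the structure matrix of (e1,e2) is [[w11, w12]; [w21, w22]],
   i.e. e_j^2 = w1j e1 + w2j e2 *)
Definition struct_mx (e1 e2 : V) (w11 w12 w21 w22 : K) : Prop :=
  mul e1 e1 = w11 *: e1 + w21 *: e2 /\ mul e2 e2 = w12 *: e1 + w22 *: e2.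

Definition pseudo_square (w11 w12 w21 w22 : K) : {set letter} :=
  [set x | match x with
           | L => w11 != 0 | T => w12 != 0 | R => w22 != 0 | D => w21 != 0 end].

Definition in_square (E : {set letter}) : Prop :=
  exists e1 e2 w11 w12 w21 w22, natural_basis e1 e2 /\
    struct_mx e1 e2 w11 w12 w21 w22 /\ E = pseudo_square w11 w12 w21 w22.

Definition square_is (F : {set {set letter}}) : Prop :=
  forall E, in_square E <-> E \in F.

End EvolutionAlgebras.

Definition D1 : {set {set letter}} := [set [set L; R]].
Definition D2 : {set {set letter}} := [set [set T; D]].
Definition D3 : {set {set letter}} := [set [set L; T; R]; [set L; R; D]].
Definition D4 : {set {set letter}} := [set [set L; T; D]; [set T; R; D]].
Definition D5 : {set {set letter}} := [set [set L; T; R; D]].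

(* Main.v *)
Require Import Defs.
From HB Require Import structures.
From mathcomp Require Import all_boot all_order all_algebra.
From mathcomp Require Import ring.
Set Implicit Arguments.
Unset Strict Implicit.
Import GRing.Theory.
Local Open Scope ring_scope.

Lemma eqLet (x y : letter) : (x == y) =
  match x, y with L, L | T, T | R, R | D, D => true | _, _ => false end.
Proof. by case: x; case: y; rewrite ?eqxx //; apply/eqP. Qed.

Section S.
Variables (K : fieldType) (V : vectType K) (mul : V -> V -> V).
Hypothesis Hb : bilinear_mul mul.

Lemma mulDl x y z : mul (x + y) z = mul x z + mul y z.
Proof. by case: Hb => H _; have := H 1 x y z; rewrite !scale1r. Qed.
Lemma mulDr x y z : mul z (x + y) = mul z x + mul z y.
Proof. by case: Hb => _ H; have := H 1 x y z; rewrite !scale1r. Qed.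
Lemma mul0l z : mul 0 z = 0.
Proof. by apply: (addrI (mul 0 z)); rewrite -mulDl !addr0. Qed.
Lemma mul0r z : mul z 0 = 0.
Proof. by apply: (addrI (mul z 0)); rewrite -mulDr !addr0. Qed.
Lemma mulZl a x z : mul (a *: x) z = a *: mul x z.
Proof. by case: Hb => H _; have := H a x 0 z; rewrite addr0 mul0l addr0. Qed.
Lemma mulZr a x z : mul z (a *: x) = a *: mul z x.
Proof. by case: Hb => _ H; have := H a x 0 z; rewrite addr0 mul0r addr0. Qed.

Lemma coords (e1 e2 : V) : basis_of fullv [:: e1; e2] ->
  forall x, exists a b, x = a *: e1 + b *: e2.
Proof.
case/andP=> /eqP Hs _ x.
have : x \in <<[:: e1; e2]>>%VS by rewrite Hs memvf.
rewrite span_cons span_seq1 => /memv_addP [y /vlineP [a ->] [z /vlineP [b ->] ->]].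
by exists a, b.
Qed.

Lemma basis_sub (e1 e2 f1 f2 : V) : \dim (fullv : {vspace V}) = 2%N ->
  basis_of fullv [:: e1; e2] -> e1 \in <<[:: f1; f2]>>%VS -> e2 \in <<[:: f1; f2]>>%VS ->
  basis_of fullv [:: f1; f2].
Proof.
move=> d2 /andP [/eqP Hs _] h1 h2; rewrite basisEdim d2 leqnn andbT -Hs.
by apply/span_subvP => x; rewrite !inE => /orP [] /eqP ->.
Qed.

Lemma scale_nb (e1 e2 : V) (c d : K) : \dim (fullv : {vspace V}) = 2%N ->
  c != 0 -> d != 0 -> natural_basis mul e1 e2 -> natural_basis mul (c *: e1) (d *: e2).
Proof.
move=> d2 c0 d0 [nb [h1 h2]]; split; last by rewrite !mulZl !mulZr h1 h2 !scaler0.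
apply: basis_sub d2 nb _ _.
  rewrite -{1}(scalerK c0 e1).
  by apply: memvZ; apply: memv_span; rewrite !inE eqxx.
rewrite -{1}(scalerK d0 e2).
by apply: memvZ; apply: memv_span; rewrite !inE eqxx orbT.
Qed.

Lemma swap_nb (e1 e2 : V) : natural_basis mul e1 e2 -> natural_basis mul e2 e1.
Proof.
move=> [nb [h1 h2]]; split => //.
rewrite (@perm_basis _ _ _ [:: e1; e2]) //.
by rewrite (perm_catC [:: e2] [:: e1]).
Qed.

Lemma scale_sm (e1 e2 : V) (c d w11 w12 w21 w22 v11 v12 v21 v22 : K) :
  c != 0 -> d != 0 -> struct_mx mul e1 e2 w11 w12 w21 w22 ->
  v11 = c * w11 -> v12 = d ^+ 2 * w12 / c -> v21 = c ^+ 2 * w21 / d -> v22 = d * w22 ->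
  struct_mx mul (c *: e1) (d *: e2) v11 v12 v21 v22.
Proof.
move=> c0 d0 [s1 s2] -> -> -> ->; split;
  rewrite !mulZl !mulZr ?s1 ?s2 !scalerDr !scalerA; congr (_ *: _ + _ *: _). all: by field.
Qed.

Lemma swap_sm (e1 e2 : V) (w11 w12 w21 w22 : K) :
  struct_mx mul e1 e2 w11 w12 w21 w22 -> struct_mx mul e2 e1 w22 w21 w12 w11.
Proof. by case=> s1 s2; split; rewrite addrC. Qed.

Lemma det_nz (e1 e2 : V) (w11 w12 w21 w22 : K) : 
  natural_basis mul e1 e2 -> struct_mx mul e1 e2 w11 w12 w21 w22 ->
  \dim (fullv : {vspace V}) = 2%N -> square_full mul -> w11 != 0 ->
  w11 * w22 != w12 * w21.
Proof.
move=> [nb [h12 h21]] [s1 s2] d2 sq w0; apply/eqP => det.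
have E2 : mul e2 e2 = (w12/w11) *: mul e1 e1.
  rewrite s1 s2 scalerDr !scalerA; congr (_ *: _ + _ *: _); first by field.
  by rewrite mulrAC -det mulrAC divff // mul1r.
have Hall : forall x y, mul x y \in <[mul e1 e1]>%VS.
  move=> x y; have [a [b ->]] := coords nb x; have [c [d ->]] := coords nb y.
  rewrite !mulDl !mulDr !mulZl !mulZr h12 h21 E2 ?scaler0 ?addr0 ?add0r.
  by rewrite rpredD // !memvZ // memv_line.
have : (fullv <= <[mul e1 e1]>)%VS.
  apply/subvP => z _; have [s ->] := sq z; apply: memv_suml => p _; exact: Hall.
by move/dimvS; rewrite d2 dim_vline; case: (_ != 0).
Qed.
End S.


Ltac nz := rewrite ?mulf_eq0 ?invr_eq0 ?expf_eq0 ?oner_eq0 /=;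
  repeat match goal with
  | H : is_true (?x != 0) |- context[?x == 0] => rewrite (negbTE H)
  | H : (?x != 0) = true |- context[?x == 0] => rewrite (negbTE H) end; by [].

Ltac getl H := have := H L; have := H T; have := H R; have := H D;
  rewrite !inE !eqLet /=.

Theorem lemma3p1 (K : fieldType) (V : vectType K) (mul : V -> V -> V) :
  \dim (fullv : {vspace V}) = 2%N ->
  bilinear_mul mul ->
  evolution_algebra mul ->
  square_full mul ->
  (square_is mul D1 ->
     exists e1 e2, natural_basis mul e1 e2 /\ struct_mx mul e1 e2 1 0 0 1) /\
  (square_is mul D2 ->
     exists e1 e2 (a : K), a != 0 /\
       natural_basis mul e1 e2 /\ struct_mx mul e1 e2 0 a 1 0) /\
  (square_is mul D3 ->
     exists e1 e2 (a : K), a != 0 /\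
       natural_basis mul e1 e2 /\ struct_mx mul e1 e2 1 a 0 1) /\
  (square_is mul D4 ->
     exists e1 e2 (a : K), a != 0 /\
       natural_basis mul e1 e2 /\ struct_mx mul e1 e2 0 1 a 1) /\
  (square_is mul D5 ->
     exists e1 e2 (a b : K), a != 0 /\ b != 0 /\ a * b != 1 /\
       natural_basis mul e1 e2 /\ struct_mx mul e1 e2 1 a b 1).
Proof.
move=> d2 Hb [e1 [e2 nb]] sq.
have [a11 [a21 E1]] := coords nb.1 (mul e1 e1).
have [a12 [a22 E2]] := coords nb.1 (mul e2 e2).
have sm : struct_mx mul e1 e2 a11 a12 a21 a22 by split.
have ins : in_square mul (pseudo_square a11 a12 a21 a22).
  by exists e1, e2, a11, a12, a21, a22.
have snb := @scale_nb _ _ _ Hb.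
have ssm := @scale_sm _ _ _ Hb.
have swb := @swap_nb _ _ mul.
have sws := @swap_sm _ _ mul.
split.
  move=> /(_ (pseudo_square a11 a12 a21 a22)) [/(_ ins) + _].
  rewrite !inE => /eqP/setP H; getl H.
  move=> /negbFE/eqP z21 n22 /negbFE/eqP z12 n11.
  exists (a11^-1 *: e1), (a22^-1 *: e2); split; first by apply: snb => //; nz.
  apply: (ssm _ _ _ _ _ _ _ _ _ _ _ _ _ _ sm); try nz; subst; field; nz.
split.
  move=> /(_ (pseudo_square a11 a12 a21 a22)) [/(_ ins) + _].
  rewrite !inE => /eqP/setP H; getl H.
  move=> n21 /negbFE/eqP z22 n12 /negbFE/eqP z11.
  exists e1, (a21 *: e2), (a21 ^+ 2 * a12); split; first by nz.
  split; first by rewrite -[e1]scale1r; apply: snb => //; nz.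
  rewrite -[e1]scale1r; apply: (ssm _ _ _ _ _ _ _ _ _ _ _ _ _ _ sm); try nz; subst; field; nz.
split.
  move=> /(_ (pseudo_square a11 a12 a21 a22)) [/(_ ins) + _].
  rewrite !inE => /orP [] /eqP/setP H; getl H.
    move=> /negbFE/eqP z21 n22 n12 n11.
    exists (a11^-1 *: e1), (a22^-1 *: e2), (a22^-1 ^+ 2 * a12 / a11^-1).
    split; first by nz.
    split; first by apply: snb => //; nz.
    apply: (ssm _ _ _ _ _ _ _ _ _ _ _ _ _ _ sm); try nz; subst; field; nz.
  move=> n21 n22 /negbFE/eqP z12 n11.
  exists (a22^-1 *: e2), (a11^-1 *: e1), (a11^-1 ^+ 2 * a21 / a22^-1).
  split; first by nz.
  split; first by apply: snb => //; try nz; apply: swb.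
  apply: (ssm _ _ _ _ _ _ _ _ _ _ _ _ _ _ (sws _ _ _ _ _ _ sm)); try nz; subst; field; nz.
split.
  move=> /(_ (pseudo_square a11 a12 a21 a22)) [/(_ ins) + _].
  rewrite !inE => /orP [] /eqP/setP H; getl H.
    move=> n21 /negbFE/eqP z22 n12 n11.
    exists ((a21 / a11 ^+ 2) *: e2), (a11^-1 *: e1), ((a21 / a11 ^+ 2) ^+ 2 * a12 / a11^-1).
    split; first by nz.
    split; first by apply: snb => //; try nz; apply: swb.
    apply: (ssm _ _ _ _ _ _ _ _ _ _ _ _ _ _ (sws _ _ _ _ _ _ sm)); try nz; subst; field; nz.
  move=> n21 n22 n12 /negbFE/eqP z11.
  exists ((a12 / a22 ^+ 2) *: e1), (a22^-1 *: e2), ((a12 / a22 ^+ 2) ^+ 2 * a21 / a22^-1).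
  split; first by nz.
  split; first by apply: snb => //; nz.
  apply: (ssm _ _ _ _ _ _ _ _ _ _ _ _ _ _ sm); try nz; subst; field; nz.
move=> /(_ (pseudo_square a11 a12 a21 a22)) [/(_ ins) + _].
rewrite !inE => /eqP/setP H; getl H.
move=> n21 n22 n12 n11.
have det := det_nz Hb nb sm d2 sq n11.
exists (a11^-1 *: e1), (a22^-1 *: e2), (a22^-1 ^+ 2 * a12 / a11^-1), (a11^-1 ^+ 2 * a21 / a22^-1).
split; first by nz.
split; first by nz.
split.
  apply/eqP => h; move/eqP: det; apply.
  rewrite -[LHS]mulr1 -h; field; nz.
split; first by apply: snb => //; nz.
apply: (ssm _ _ _ _ _ _ _ _ _ _ _ _ _ _ sm); try nz; subst; field; nz.
Qed.
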